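(* Let $f=f(x_1,\ldots,x_n)$ be a positive non-canalyzing Boolean function such that for every $i\in[n]$ both restrictions $f_{|x_i=0}$ and $f_{|x_i=1}$ are canalyzing. Then $f$ has at least $n+2$ extremal points.
   Context: $B=\{0,1\}$, $\preceq$ coordinatewise order on $B^n$. $f$ is positive if $f(\mathbf{x})=1$ and $\mathbf{x}\preceq\mathbf{y}$ imply $f(\mathbf{y})=1$. Extremal points are the $\preceq$-maximal false points and the $\preceq$-minimal true points of $f$. $f_{|x_i=\alpha}$ is obtained by fixing $x_i=\alpha$. $f$ is canalyzing if for some $i$, $f_{|x_i=0}$ or $f_{|x_i=1}$ is constant. *)

(* Defs.v *)
From mathcomp Require Import all_boot.
Set Implicit Arguments. Unset Strict Implicit. Unset Printing Implicit Defensive.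

Notation vec n := {ffun 'I_n -> bool}.

Definition vle n (x y : vec n) : bool := [forall i, (x i <= y i)%N].

Definition positive n (f : vec n -> bool) : Prop :=
  forall x y : vec n, f x -> vle x y -> f y.

Definition max_false n (f : vec n -> bool) (x : vec n) : bool :=
  ~~ f x && [forall y, (vle x y && (y != x)) ==> f y].
Definition min_true n (f : vec n -> bool) (x : vec n) : bool :=
  f x && [forall y, (vle y x && (y != x)) ==> ~~ f y].

Definition extremal n (f : vec n -> bool) : {set vec n} :=
  [set x | max_false f x || min_true f x].

(* f_{|x_i = a} : the function of the remaining n variables obtained by
   fixing variable i of an (n+1)-variable function to a. *)
Definition restrict n (f : vec n.+1 -> bool) (i : 'I_n.+1) (a : bool)
  : vec n -> bool :=
  fun y => f [ffun k => if unlift i k is Some j then y j else a].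

Definition canalyzing n (f : vec n -> bool) : Prop :=
  exists (i : 'I_n) (a c : bool), forall x : vec n, x i = a -> f x = c.

(* Main.v *)
Require Import Defs.
From mathcomp Require Import all_boot.
Set Implicit Arguments. Unset Strict Implicit. Unset Printing Implicit Defensive.

Definition e1 n (i : 'I_n) : vec n := [ffun k => k == i].
Definition c1 n (i : 'I_n) : vec n := [ffun k => k != i].
Definition e2 n (i j : 'I_n) : vec n := [ffun k => (k == i) || (k == j)].
Definition c2 n (i j : 'I_n) : vec n := [ffun k => (k != i) && (k != j)].
Definition ext n (i : 'I_n.+1) (a : bool) (y : vec n) : vec n.+1 :=
  [ffun k => if unlift i k is Some j then y j else a].

Lemma extL n (i : 'I_n.+1) a y j : ext i a y (lift i j) = y j.
Proof. by rewrite ffunE liftK. Qed.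
Lemma extI n (i : 'I_n.+1) a y : ext i a y i = a.
Proof. by rewrite ffunE unlift_none. Qed.

Lemma fifth N (x1 x2 x3 x4 : 'I_N) : 4 < N ->
  exists z : 'I_N, [&& z != x1, z != x2, z != x3 & z != x4].
Proof.
move=> hN.
have [z hz|h] := pickP (fun z : 'I_N => [&& z != x1, z != x2, z != x3 & z != x4]).
  by exists z.
exfalso.
have: #|'I_N| <= size [:: x1; x2; x3; x4].
  apply: leq_trans (card_size _).
  apply: subset_leq_card; apply/subsetP => z _.
  move: (h z); rewrite !inE -!negb_or => /negbFE.
  by [].
by rewrite card_ord /= leqNgt hN.
Qed.

Lemma neq_ex n (x y : vec n) : y != x -> exists m, y m != x m.
Proof.
move=> hne; apply/existsP; apply: contraR hne => /existsPn h.
by apply/eqP/ffunP => m; apply/eqP; have := h m; rewrite negbK.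
Qed.

Lemma combin (T : eqType) (y : T -> bool) (p q j k m : T) b :
  (j == p) || (j == q) -> (k == p) || (k == q) -> (m == p) || (m == q) ->
  y j = b -> y k = b -> y m = ~~ b -> j = k.
Proof.
by case/orP => /eqP ?; case/orP => /eqP ?; case/orP => /eqP ?; subst;
  case: b => /= h1 h2 h3; congruence.
Qed.

Section F.
Variables (n : nat) (f : vec n.+1 -> bool).
Hypothesis pos : positive f.
Hypothesis ncan : ~ canalyzing f.

Lemma F1 i : ~~ f (e1 i).
Proof.
apply/negP => hf; apply: ncan; exists i, true, true => x hx.
apply: pos hf _; apply/forallP => k; rewrite ffunE.
by case: eqP => [->|]; rewrite ?hx.
Qed.

Lemma F2 i : f (c1 i).
Proof.
apply/negPn/negP => /negP hf; apply: ncan; exists i, false, false => x hx.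
apply/negP => fx; apply: hf; apply: pos fx _; apply/forallP => k; rewrite ffunE.
by case: (eqVneq k i) => [->|_]; rewrite ?hx //; case: (x k).
Qed.

Lemma LF2 (y : vec n.+1) : (forall j k, y j = false -> y k = false -> j = k) -> f y.
Proof.
move=> h.
have [j hj|hn] := pickP (fun j => ~~ y j).
  apply: pos (F2 j) _; apply/forallP => k; rewrite ffunE.
  case: (eqVneq k j) => [_|kj] //=; case hy: (y k) => //.
  by move/negbTE: hj => /(h _ _ hy) => jk; rewrite jk eqxx in kj.
apply: pos (F2 ord0) _; apply/forallP => k; rewrite ffunE.
by have := hn k => /negbFE ->; case: (k != ord0).
Qed.

Lemma LF1 (y : vec n.+1) : (forall j k, y j -> y k -> j = k) -> ~~ f y.
Proof.
move=> h; apply/negP => fy.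
have [j hj|hn] := pickP (fun j => y j).
  have := F1 j; apply/negP/negPn; apply: pos fy _; apply/forallP => k; rewrite ffunE.
  case hy: (y k) => //=; by rewrite (h _ _ hy hj) eqxx.
have := F1 ord0; apply/negP/negPn; apply: pos fy _; apply/forallP => k.
by rewrite hn.
Qed.

Lemma minT p q : f (e2 p q) -> min_true f (e2 p q).
Proof.
move=> fx; rewrite /min_true fx /=; apply/forallP => y; apply/implyP => /andP [hle hne].
move/forallP: hle => hle.
have [m hm] := neq_ex hne.
apply: LF1 => j k hj hk.
have hx : forall t, y t -> (t == p) || (t == q).
  by move=> t ht; have := hle t; rewrite ht ffunE; case: (_ || _).
have hym : y m = ~~ true.
  by have := hle m; move: hm; case: (y m); case: (e2 p q m).
have hxm : (m == p) || (m == q).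
  by move: hm; rewrite hym ffunE; case: (_ || _).
exact: (combin (y := y) (hx _ hj) (hx _ hk) hxm hj hk hym).
Qed.

Lemma maxF p q : ~~ f (c2 p q) -> max_false f (c2 p q).
Proof.
move=> fx; rewrite /max_false fx /=; apply/forallP => y; apply/implyP => /andP [hle hne].
move/forallP: hle => hle.
have [m hm] := neq_ex hne.
apply: LF2 => j k hj hk.
have hx : forall t, y t = false -> (t == p) || (t == q).
  by move=> t ht; have := hle t; rewrite ht ffunE; case: (t == p); case: (t == q).
have hym : y m = ~~ false.
  by have := hle m; move: hm; case: (y m); case: (c2 p q m).
have hxm : (m == p) || (m == q).
  by move: hm; rewrite hym ffunE; case: (m == p); case: (m == q).
exact: (combin (y := y) (hx _ hj) (hx _ hk) hxm hj hk hym).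
Qed.

Lemma Xcross p q r s : f (e2 p q) -> ~~ f (c2 r s) ->
  p != r -> p != s -> q != r -> q != s -> False.
Proof.
move=> h1 /negP h2 pr ps qr qs; apply: h2; apply: pos h1 _.
apply/forallP => k; rewrite !ffunE.
case: (eqVneq k p) => [->|kp]; first by rewrite pr ps.
by case: (eqVneq k q) => [->|kq]; rewrite ?qr ?qs.
Qed.

End F.


Ltac dq := solve [ done | by rewrite eq_sym ].

Lemma key_center N (G H : 'I_N -> 'I_N -> bool) : 4 < N ->
 (forall p q, G p q -> G q p) -> (forall p q, H p q -> H q p) ->
 (forall p q, G p q -> p != q) -> (forall p q, H p q -> p != q) ->
 (forall i, exists j, G i j) -> (forall i, exists j, H i j) ->
 (forall p q r s, G p q -> H r s -> p != r -> p != s -> q != r -> q != s -> False) ->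
 (forall a b, G a b -> forall v, v != a -> v != b -> G v a || G v b) ->
 (forall a b, G a b -> forall v, v != a -> v != b -> H v a || H v b) ->
 forall a b v1, G a b -> H v1 a -> v1 != a -> v1 != b ->
    forall v, v != a -> G a v && H a v.
Proof.
move=> hN Gs Hs Gi Hi Gn Hn X Gi' Hi'.
  move=> a b v1 gab hv1 v1a v1b.
  have ab := Gi _ _ gab.
  have S1 : forall w, w != a -> w != b -> w != v1 -> G w a.
    move=> w wa wb wv; case/orP: (Gi' a b gab w wa wb) => // gwb.
    by exfalso; apply: (X w b v1 a gwb hv1); dq.
  have S2 : forall u, u != a -> u != b -> H u a.
    move=> u ua ub; have [w /and4P [wa wb wu wv]] := fifth a b u v1 hN.
    have gw := S1 w wa wb wv.
    case/orP: (Hi' a b gab u ua ub) => // hub.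
    by exfalso; apply: (X w a u b gw hub); dq.
  have S3 : forall u, u != a -> u != b -> G u a.
    move=> u ua ub; have [w /and4P [wa wb wu _]] := fifth a b u u hN.
    have hw := S2 w wa wb.
    case/orP: (Gi' a b gab u ua ub) => // gub.
    by exfalso; apply: (X u b w a gub hw); dq.
  have S4 : H a b.
    have [y hy] := Hn b.
    case: (eqVneq y a) => [ya|ya]; first by subst; apply: Hs.
    case: (eqVneq y b) => [yb|yb]; first by subst; have := Hi _ _ hy; rewrite eqxx.
    have [w /and4P [wa wb wy _]] := fifth a b y y hN.
    by exfalso; apply: (X w a b y (S3 w wa wb) hy); dq.
  move=> v va; case: (eqVneq v b) => [->|vb]; first by rewrite gab S4.
  by apply/andP; split; [apply: Gs; apply: S3 | apply: Hs; apply: S2].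
Qed.

Lemma center N (G H : 'I_N -> 'I_N -> bool) : 4 < N ->
 (forall p q, G p q -> G q p) -> (forall p q, H p q -> H q p) ->
 (forall p q, G p q -> p != q) -> (forall p q, H p q -> p != q) ->
 (forall i, exists j, G i j) -> (forall i, exists j, H i j) ->
 (forall p q r s, G p q -> H r s -> p != r -> p != s -> q != r -> q != s -> False) ->
 exists a, forall v, v != a -> G a v && H a v.
Proof.
move=> hN Gs Hs Gi Hi Gn Hn X.
have Gp : forall p q r s, G p q -> G r s -> p != r -> p != s -> q != r -> q != s -> False.
  move=> p q r s g1 g2 pr ps qr qs.
  have [z /and4P [zp zq zr zs]] := fifth p q r s hN.
  have [y hy] := Hn z.
  have e1 : (y == p) || (y == q).
    apply/negPn/negP; rewrite negb_or => /andP [yp yq].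
    by apply: (X p q z y g1 hy); dq.
  have e2 : (y == r) || (y == s).
    apply/negPn/negP; rewrite negb_or => /andP [yr ys].
    by apply: (X r s z y g2 hy); dq.
  by case/orP: e1 => /eqP ?; case/orP: e2 => /eqP ?; subst;
     rewrite ?eqxx in pr ps qr qs.
have Gi' : forall a b, G a b -> forall v, v != a -> v != b -> G v a || G v b.
  move=> a b gab v va vb; have [w gw] := Gn v.
  case: (eqVneq w a) => [<-|wa]; first by rewrite gw.
  case: (eqVneq w b) => [<-|wb]; first by rewrite gw orbT.
  by exfalso; apply: (Gp v w a b gw gab).
have Hi' : forall a b, G a b -> forall v, v != a -> v != b -> H v a || H v b.
  move=> a b gab v va vb; have [w hw] := Hn v.
  case: (eqVneq w a) => [<-|wa]; first by rewrite hw.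
  case: (eqVneq w b) => [<-|wb]; first by rewrite hw orbT.
  by exfalso; apply: (X a b v w gab hw); dq.
have key := key_center hN Gs Hs Gi Hi Gn Hn X Gi' Hi'.
have a0 : 'I_N := Ordinal (leq_ltn_trans (leq0n 4) hN).
have [b gab] := Gn a0.
have [v1 /and4P [va vb _ _]] := fifth a0 b a0 b hN.
case/orP: (Hi' a0 b gab v1 va vb) => h.
  by exists a0; apply: (key a0 b v1).
by exists b; apply: (key b a0 v1) => //; apply: Gs.
Qed.

Lemma liftne n (i : 'I_n.+1) j : (lift i j == i) = false.
Proof. by apply/negbTE; rewrite eq_sym neq_lift. Qed.

Ltac extc i := let k1 := fresh "k" in
  move=> ?? ; repeat match goal with |- forall x : 'I__, _ => let k := fresh "k" in move=> k; case: (unliftP i k) => [? ->|->] end.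

Section G.
Variables (n : nat) (f : vec n.+1 -> bool).
Hypothesis pos : positive f.
Hypothesis ncan : ~ canalyzing f.

Lemma F3 i : canalyzing (restrict f i true) -> exists j, (i != j) && f (e2 i j).
Proof.
case=> j [a [c h]]; rewrite /restrict in h.
case: a h => h.
  have := h (e1 j); rewrite ffunE eqxx => /(_ erefl).
  case: c h => h hf.
    exists (lift i j); rewrite neq_lift /=.
    suff -> : e2 i (lift i j) = ext i true (e1 j) by [].
    apply/ffunP => k; case: (unliftP i k) => [k' ->|->];
      by rewrite ?ffunE ?liftK ?unlift_none ?ffunE ?liftne ?(inj_eq (@lift_inj _ i)) ?eqxx.
  exfalso; move: (h [ffun=> true]); rewrite ffunE => /(_ erefl) /negbT /negP; apply.
  apply: LF2 => // j1 k1.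
  by case: (unliftP i j1) => [? ->|->]; rewrite ?ffunE ?liftK ?unlift_none ?ffunE.
case: c h => h.
  exfalso; move: (h [ffun=> false]); rewrite ffunE => /(_ erefl); apply/negP.
  apply: LF1 => // j1 k1.
  case: (unliftP i j1) => [? ->|->]; rewrite ?ffunE ?liftK ?unlift_none ?ffunE //.
  by case: (unliftP i k1) => [? ->|->]; rewrite ?ffunE ?liftK ?unlift_none ?ffunE.
exfalso; move: (h (c1 j)); rewrite ffunE eqxx => /(_ erefl) /negbT /negP; apply.
apply: LF2 => // j1 k1.
case: (unliftP i j1) => [? ->|->]; rewrite ?ffunE ?liftK ?unlift_none ?ffunE //.
case: (unliftP i k1) => [? ->|->]; rewrite ?ffunE ?liftK ?unlift_none ?ffunE //.
by move=> /negbFE/eqP-> /negbFE/eqP->.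
Qed.

Lemma F4 i : canalyzing (restrict f i false) -> exists j, (i != j) && ~~ f (c2 i j).
Proof.
case=> j [a [c h]]; rewrite /restrict in h.
case: a h => h.
  case: c h => h.
    exfalso; move: (h (e1 j)); rewrite ffunE eqxx => /(_ erefl); apply/negP.
    apply: LF1 => // j1 k1.
    case: (unliftP i j1) => [? ->|->]; rewrite ?ffunE ?liftK ?unlift_none ?ffunE //.
    case: (unliftP i k1) => [? ->|->]; rewrite ?ffunE ?liftK ?unlift_none ?ffunE //.
    by move=> /eqP-> /eqP->.
  exfalso; move: (h [ffun=> true]); rewrite ffunE => /(_ erefl) /negbT /negP; apply.
  apply: LF2 => // j1 k1.
  case: (unliftP i j1) => [? ->|->]; rewrite ?ffunE ?liftK ?unlift_none ?ffunE //.
  by case: (unliftP i k1) => [? ->|->]; rewrite ?ffunE ?liftK ?unlift_none ?ffunE.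
have := h (c1 j); rewrite ffunE eqxx => /(_ erefl).
case: c h => h hf.
  exfalso; move: (h [ffun=> false]); rewrite ffunE => /(_ erefl); apply/negP.
  apply: LF1 => // j1 k1.
  by case: (unliftP i j1) => [? ->|->]; rewrite ?ffunE ?liftK ?unlift_none ?ffunE.
exists (lift i j); rewrite neq_lift /=.
suff -> : c2 i (lift i j) = ext i false (c1 j) by rewrite hf.
apply/ffunP => k; case: (unliftP i k) => [k' ->|->];
  by rewrite ?ffunE ?liftK ?unlift_none ?ffunE ?liftne ?(inj_eq (@lift_inj _ i)) ?eqxx.
Qed.
End G.

Lemma big_case n (f : vec n.+1 -> bool) : 3 < n -> positive f -> ~ canalyzing f ->
  (forall i : 'I_n.+1, canalyzing (restrict f i false) /\
                       canalyzing (restrict f i true)) ->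
  n.+3 <= #|extremal f|.
Proof.
move=> hn pos ncan hcan.
pose G := fun p q : 'I_n.+1 => (p != q) && f (e2 p q).
pose H := fun p q : 'I_n.+1 => (p != q) && ~~ f (c2 p q).
have e2C : forall p q : 'I_n.+1, e2 p q = e2 q p.
  by move=> p q; apply/ffunP => k; rewrite !ffunE orbC.
have c2C : forall p q : 'I_n.+1, c2 p q = c2 q p.
  by move=> p q; apply/ffunP => k; rewrite !ffunE andbC.
have [a ha] : exists a, forall v, v != a -> G a v && H a v.
  apply: center => //.
  - by move=> p q; rewrite /G e2C eq_sym.
  - by move=> p q; rewrite /H c2C eq_sym.
  - by move=> p q /andP [].
  - by move=> p q /andP [].
  - by move=> i; apply: F3 => //; case: (hcan i).
  - by move=> i; apply: F4 => //; case: (hcan i).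
  - move=> p q r s /andP [_ g] /andP [_ h'] pr ps qr qs.
    exact: (Xcross pos g h' pr ps qr qs).
pose g := fun x : 'I_n + 'I_n => match x with
  | inl j => e2 a (lift a j) | inr j => c2 a (lift a j) end.
have hG : forall j, f (e2 a (lift a j)).
  by move=> j; case/andP: (ha (lift a j) (negbT (liftne a j))) => /andP [].
have hH : forall j, ~~ f (c2 a (lift a j)).
  by move=> j; case/andP: (ha (lift a j) (negbT (liftne a j))) => _ /andP [].
have ginj : injective g.
  case=> j; case=> k /=.
  - move/ffunP/(_ (lift a j)); rewrite !ffunE eqxx orbT liftne /=.
    by move/esym/eqP/lift_inj ->.
  - by move=> e; have := hG j; rewrite e (negbTE (hH k)).
  - by move=> e; have := hG k; rewrite -e (negbTE (hH j)).
  - move/ffunP/(_ (lift a j)); rewrite !ffunE eqxx andbF /= liftne /=.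
    by move/esym/negbFE/eqP/lift_inj ->.
have sub : [set g x | x : 'I_n + 'I_n] \subset extremal f.
  apply/subsetP => y /imsetP [[j|j] _ ->]; rewrite inE /=.
    by rewrite minT ?orbT.
  by rewrite maxF.
apply: leq_trans (subset_leq_card sub).
rewrite card_imset // card_sum card_ord.
by rewrite -addn3 leq_add2l ltnW.
Qed.

Lemma list_count N (A : {set vec N}) (s : seq (vec N)) :
  uniq s -> all (fun x => x \in A) s -> size s <= #|A|.
Proof.
move=> u /allP h; rewrite -(card_uniqP u); apply: subset_leq_card.
by apply/subsetP => x /h.
Qed.

Notation o3 k := (@Ordinal 3 k isT).
Notation o4 k := (@Ordinal 4 k isT).
Notation o2 k := (@Ordinal 2 k isT).

Ltac ffeq := apply/ffunP; case => [[|[|[|[|?]]]] ?]; rewrite !ffunE //.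

Lemma case3 (f : vec 3 -> bool) : positive f -> ~ canalyzing f -> 5 <= #|extremal f|.
Proof.
move=> pos ncan.
have t1 : f (e2 (o3 0) (o3 1)).
  by rewrite (_ : e2 _ _ = c1 (o3 2)); [apply: F2 | ffeq].
have t2 : f (e2 (o3 0) (o3 2)).
  by rewrite (_ : e2 _ _ = c1 (o3 1)); [apply: F2 | ffeq].
have t3 : f (e2 (o3 1) (o3 2)).
  by rewrite (_ : e2 _ _ = c1 (o3 0)); [apply: F2 | ffeq].
have u1 : ~~ f (c2 (o3 0) (o3 1)).
  by rewrite (_ : c2 _ _ = e1 (o3 2)); [apply: F1 | ffeq].
have u2 : ~~ f (c2 (o3 0) (o3 2)).
  by rewrite (_ : c2 _ _ = e1 (o3 1)); [apply: F1 | ffeq].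
have u3 : ~~ f (c2 (o3 1) (o3 2)).
  by rewrite (_ : c2 _ _ = e1 (o3 0)); [apply: F1 | ffeq].
apply: leq_trans (list_count (s := [:: e2 (o3 0) (o3 1); e2 (o3 0) (o3 2); e2 (o3 1) (o3 2);
   c2 (o3 0) (o3 1); c2 (o3 0) (o3 2); c2 (o3 1) (o3 2)]) _ _) => //.
  apply: (@map_uniq _ _ (fun x : vec 3 => [:: x (o3 0); x (o3 1); x (o3 2)])).
  by rewrite /= !ffunE.
by rewrite /= !inE ?minT ?maxF ?orbT.
Qed.

Lemma case4 (f : vec 4 -> bool) : positive f -> ~ canalyzing f -> 6 <= #|extremal f|.
Proof.
move=> pos ncan.
have P : forall p q r s : 'I_4, e2 p q = c2 r s -> e2 p q \in extremal f.
  move=> p q r s E; rewrite inE; case hf: (f (e2 p q)).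
    by rewrite (minT pos ncan hf) orbT.
  by rewrite E (maxF pos ncan) // -E hf.
apply: leq_trans (list_count (s := [:: e2 (o4 0) (o4 1); e2 (o4 0) (o4 2); e2 (o4 0) (o4 3);
   e2 (o4 1) (o4 2); e2 (o4 1) (o4 3); e2 (o4 2) (o4 3)]) _ _) => //.
  apply: (@map_uniq _ _ (fun x : vec 4 => [:: x (o4 0); x (o4 1); x (o4 2); x (o4 3)])).
  by rewrite /= !ffunE.
rewrite /=.
rewrite (P _ _ (o4 2) (o4 3)); last by ffeq.
rewrite (P _ _ (o4 1) (o4 3)); last by ffeq.
rewrite (P _ _ (o4 1) (o4 2)); last by ffeq.
rewrite (P _ _ (o4 0) (o4 3)); last by ffeq.
rewrite (P _ _ (o4 0) (o4 2)); last by ffeq.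
rewrite (P _ _ (o4 0) (o4 1)); last by ffeq.
by [].
Qed.

Theorem mainTheorem8 (n : nat) (f : vec n.+1 -> bool) :
  positive f ->
  ~ canalyzing f ->
  (forall i : 'I_n.+1, canalyzing (restrict f i false) /\
                       canalyzing (restrict f i true)) ->
  n.+3 <= #|extremal f|.
Proof.
case: n f => [|[|[|[|n]]]] f pos ncan hcan.
- by case: (hcan ord0) => [[[i hi] _] _].
- exfalso; have := F1 pos ncan (o2 1).
  by rewrite (_ : e1 _ = c1 (o2 0)) ?F2 //; apply/ffunP => k; rewrite !ffunE; case: k => [[|[|k]] Hk].
- exact: case3.
- exact: case4.
- by apply: big_case.
Qed.
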